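(* Let $H \le G$ be finite groups such that the interval $[H,G]$ is top Boolean. Then $[H,G]$ is $H$-cyclic, i.e. there exists $g \in G$ with $\langle H, g\rangle = G$.
   Context: The interval $[H,G]$ is the lattice of subgroups $K$ with $H \le K \le G$ (meet = intersection, join = generated subgroup). Its coatoms are the maximal elements of $[H,G]$ strictly below $G$. The top interval of $[H,G]$ is $[T,G]$ where $T$ is the intersection (meet) of all coatoms. A finite lattice is Boolean if it is isomorphic to the lattice of all subsets of a finite set; $[H,G]$ is top Boolean if its top interval is Boolean. $[H,G]$ is called $H$-cyclic if there is $g \in G$ with $\langle H,g\rangle = G$. *)

(* Defs.v *)
From mathcomp Require Import all_boot all_fingroup.
Set Implicit Arguments. Unset Strict Implicit. Unset Printing Implicit Defensive.
Local Open Scope group_scope.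

Definition coatom (gT : finGroupType) (H G M : {group gT}) : bool :=
  [&& H \subset M, M \proper G &
      [forall K : {group gT},
         ((M \subset K) && (K \subset G) && (H \subset K)) ==> ((K :==: M) || (K :==: G))]].

(* The bottom T of the top interval [T,G]: the meet of all coatoms
   (the empty meet is the top element G). *)
Definition top_bottom (gT : finGroupType) (H G : {group gT}) : {set gT} :=
  G :&: \bigcap_(M : {group gT} | coatom H G M) M.

(* The interval [A,G] of subgroups K with A <= K <= G is Boolean: it is
   lattice-isomorphic to the power set of {0,...,n-1} for some n.  A lattice
   isomorphism is given as an order isomorphism (bijection preserving and
   reflecting inclusion). *)
Definition boolean_interval (gT : finGroupType) (A : {set gT}) (G : {group gT}) : Prop :=
  exists n : nat, exists f : {set 'I_n} -> {group gT},
    [/\ forall X : {set 'I_n}, (A \subset f X) && (f X \subset G),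
        forall K : {group gT}, A \subset K -> K \subset G -> exists X, f X = K
      & forall X Y : {set 'I_n}, (X \subset Y) = (f X \subset f Y)].

Definition top_boolean (gT : finGroupType) (H G : {group gT}) : Prop :=
  boolean_interval (top_bottom H G) G.

(* Main.v *)
Require Import Defs.
From mathcomp Require Import all_boot all_fingroup.
Local Open Scope group_scope.

Theorem theorem2p4 (gT : finGroupType) (H G : {group gT}) :
  H \subset G -> top_boolean H G ->
  exists2 g, g \in G & << H :|: [set g] >> = G.
Proof.
move=> sHG [n [f [Hf Hsurj Hiso]]].
set T := top_bottom H G.
have sTG : T \subset G by rewrite /T /top_bottom subsetIl.
have sTM : forall M : {group gT}, coatom H G M -> T \subset M.
  move=> M cM; rewrite /T /top_bottom; apply: subset_trans (subsetIr _ _) _.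
  by apply: (bigcap_inf M).

have [Y fY] := Hsurj G sTG (subxx _).
have sGfT : G \subset f setT by rewrite -fY -Hiso subsetT.
pose b i := f (~: [set i]).
pose a i := f [set i].
have fG : forall X, f X \subset G by move=> X; case/andP: (Hf X).
have fT : forall X, T \subset f X by move=> X; case/andP: (Hf X).
have meet0 : forall i x, x \in a i -> x \in b i -> x \in f set0.
  move=> i x xa xb.
  have sTI : T \subset (a i :&: b i)%G by rewrite /= subsetI !fT.
  have sIG : (a i :&: b i)%G \subset G by rewrite /= subIset // fG.
  have [Z fZ] := Hsurj _ sTI sIG.
  have Z1 : Z \subset [set i] by rewrite Hiso fZ /= subsetIl.
  have Z2 : Z \subset ~: [set i] by rewrite Hiso fZ /= subsetIr.
  have Z0 : Z = set0.
    apply/eqP; rewrite -subset0 -(setICr [set i]); by rewrite subsetI Z1 Z2.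
  by rewrite -Z0 fZ /= inE xa xb.
have ex : forall i, exists x, x \in a i :\: f set0.
  move=> i; have : ~~ (a i \subset f set0).
    rewrite /a -Hiso subset0; apply/set0Pn; exists i; exact: set11.
  by case/subsetPn => x xa xn; exists x; rewrite inE xn xa.
pose gi i := odflt 1 [pick x in a i :\: f set0].
have giP : forall i, gi i \in a i :\: f set0.
  move=> i; rewrite /gi; case: pickP => [x // | none].
  by have [x] := ex i; rewrite none.
pose g := \prod_(j <- enum 'I_n) gi j.
have gG : g \in G.
  rewrite /g; apply: group_prod => j _; have := giP j; rewrite inE => /andP[_ ja].
  exact: (subsetP (fG [set j]) _ ja).
have gnb : forall i, g \notin b i.
  move=> i; rewrite /g; have : i \in enum 'I_n by rewrite mem_enum.
  move: (enum_uniq 'I_n); move: (enum 'I_n) => r Ur ir.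
  case/splitPr: ir Ur => r1 r2 Ur.
  rewrite big_cat big_cons /=.
  have inb : forall j, j != i -> gi j \in b i.
    move=> j ji; have := giP j; rewrite inE => /andP[_ ja].
    apply: (subsetP _ _ ja); rewrite /a /b -Hiso sub1set !inE; exact: ji.
  rewrite cat_uniq /= in Ur; case/and4P: Ur => _ Hr1 Hi2 _.
  have p1 : \prod_(j <- r1) gi j \in b i.
    rewrite big_seq; apply: group_prod => j jr; apply: inb; apply/eqP => ji; subst j.
    by move: Hr1; rewrite /= jr.
  have p2 : \prod_(j <- r2) gi j \in b i.
    rewrite big_seq; apply: group_prod => j jr; apply: inb; apply/eqP => ji; subst j.
    by move: Hi2; rewrite jr.
  rewrite groupMl // groupMr //; apply/negP => gib.
  have := giP i; rewrite inE => /andP[nf ia]; move/negP: nf; apply; exact: meet0 ia gib.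
exists g => //.
set K := << H :|: [set g] >>.
have sKG : K \subset G by rewrite gen_subG subUset sHG sub1set.
apply/eqP; rewrite eqEsubset sKG /=; apply/negPn/negP => nGK.
have pKG : K \proper G by rewrite properE sKG nGK.
have [M maxM sKM] := @maxgroup_exists _
   (fun M : {group gT} => (K \subset M) && (M \proper G)) [group of K]
   (introT andP (conj (subxx _) pKG)).
case/maxgroupP: maxM => /andP[_ pMG] maxM.
have cM : coatom H G M.
  rewrite /coatom pMG (subset_trans (subset_trans (subsetUl _ _) (subset_gen _)) sKM) /=.
  apply/forallP => K2; apply/implyP => /andP[/andP[sMK2 sK2G] _].
  case: (boolP (G \subset K2)) => [sGK2 | nGK2].
    by rewrite orbC eqEsubset sK2G sGK2.
  rewrite (maxM K2) ?eqxx //.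
  by rewrite (subset_trans sKM sMK2) properE sK2G nGK2.
have [X fX] := Hsurj M (sTM M cM) (proper_sub pMG).
have : ~~ (setT \subset X).
  apply/negP => sTX; move: pMG; rewrite properE -fX; case/andP => _; apply/negP/negPn.
  apply: subset_trans sGfT _; by rewrite -Hiso.
case/subsetPn => i _ iX.
have sMb : M \subset b i.
  rewrite -fX /b -Hiso; apply/subsetP => j jX; rewrite !inE.
  by apply/eqP => ji; subst j; rewrite jX in iX.
move/negP: (gnb i); apply; apply: (subsetP sMb); apply: (subsetP sKM).
by apply: mem_gen; rewrite !inE eqxx orbT.
Qed.
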